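(* Let $\sigma>0$ and $m\in\mathbb{N}$ with $m\ge\sigma$. Let $Q_m$ be the $L_2(0,1)$-orthogonal projection onto piecewise constant functions on the partition $\Delta_i=[(i-1)/m,i/m)$, $[Q_mx](s)=m\int_{\Delta_i}x(t)\,dt$ for $s\in\Delta_i$, and let $Q_m^\sigma$ be the $\langle\cdot,\cdot\rangle_\sigma$-orthogonal projection onto $\{e^{\sigma\cdot}p: p \text{ piecewise constant on this partition}\}$, i.e. $[Q_m^\sigma x](s)=e^{\sigma s}m\int_{\Delta_i}e^{-\sigma t}x(t)\,dt$ for $s\in\Delta_i$. Then $$\|Q_m-Q_m^\sigma\|_{\sigma\to\sigma}\le\frac{2\sigma}{m}\qquad\text{and}\qquad\|Q_m\|_{\sigma\to\sigma}\le1+\frac{2\sigma}{m}.$$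
   Context: $\langle x,y\rangle_\sigma=\int_0^1e^{-2\sigma t}x(t)y(t)\,dt$, $\|x\|_\sigma=\langle x,x\rangle_\sigma^{1/2}$, and for a linear operator $A$ on $L_2(0,1)$, $\|A\|_{\sigma\to\sigma}=\sup_{x\ne0}\|Ax\|_\sigma/\|x\|_\sigma$. *)

(* Defs.v *)
From HB Require Import structures.
From mathcomp Require Import all_boot all_order all_algebra.
From mathcomp Require Import all_classical all_reals all_analysis.
Set Implicit Arguments. Unset Strict Implicit. Unset Printing Implicit Defensive.
Import Order.TTheory GRing.Theory Num.Theory.
Local Open Scope classical_set_scope.
Local Open Scope ring_scope.

Section Defs.
Variable R : realType.
Local Notation mu := (@lebesgue_measure R).

Definition inL2 (x : R -> R) : Prop :=
  measurable_fun (`]0%R, 1%R[ : set R) x /\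
  mu.-integrable (`]0%R, 1%R[ : set R) (fun t => ((x t) ^+ 2)%:E).

Definition wnorm (sigma : R) (x : R -> R) : R :=
  Num.sqrt (Rintegral mu (`]0%R, 1%R[ : set R) (fun t => expR (- (2 * sigma * t)) * (x t) ^+ 2)).

(* left endpoint (i-1)/m of the cell Delta_i = [(i-1)/m, i/m) containing s *)
Definition cell_left (m : nat) (s : R) : R :=
  (Num.floor (m%:R * s))%:~R / m%:R.

Definition cell (m : nat) (s : R) : set R :=
  `[cell_left m s, cell_left m s + m%:R^-1[.

Definition Qm (m : nat) (x : R -> R) : R -> R := fun s =>
  if (0 <= s) && (s < 1) then m%:R * Rintegral mu (cell m s) x else 0.

Definition Qms (sigma : R) (m : nat) (x : R -> R) : R -> R := fun s =>
  if (0 <= s) && (s < 1) then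
    expR (sigma * s) * (m%:R * Rintegral mu (cell m s) (fun t => expR (- (sigma * t)) * x t))
  else 0.

End Defs.

(* Main.v *)
Set Warnings "-notation-overridden,-ambiguous-paths,-notation-incompatible-prefix,-deprecated".
Require Import Defs.
From HB Require Import structures.
From mathcomp Require Import all_boot all_order all_algebra.
From mathcomp Require Import all_classical all_reals all_analysis.
From mathcomp Require Import ring lra.
From mathcomp Require Import measurable_realfun.
Import Order.TTheory GRing.Theory Num.Theory.
Local Open Scope classical_set_scope.
Local Open Scope ring_scope.
Lemma expR1_le3 (R : realType) : expR (1 : R) <= 3.
Proof.
rewrite [X in expR X](_ : (1 : R) = 8%:R * 8%:R^-1); last by rewrite mulfV.
rewrite expRM_natl.
have h1 : expR (8%:R^-1 : R) <= 8%:R / 7%:R.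
  have h := expR_ge1Dx (- (8%:R^-1 : R)).
  have e1 := expRxMexpNx_1 (8%:R^-1 : R).
  have p := expR_gt0 (8%:R^-1 : R).
  have p2 := expR_gt0 (- 8%:R^-1 : R).
  rewrite ler_pdivlMr; last by rewrite ltr0n.
  nra.
apply: (@le_trans _ _ ((8%:R / 7%:R) ^+ 8)).
  by apply: lerXn2r => //; rewrite nnegrE ?expR_ge0 // ?divr_ge0.
rewrite !exprS expr0; lra.
Qed.
Lemma expR_le_12 (R : realType) (u : R) : 0 <= u -> u <= 1 -> expR u <= 1 + 2 * u.
Proof.
move=> u0 u1.
have := convex_expR (Itv01 u0 u1) (1 : R^o) (0 : R^o).
rewrite !convRE /= expR0 mulr1 mulr0 addr0.
have e3 := expR1_le3 R.
move=> h; apply: (le_trans h).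
rewrite /unstable.onem; nra.
Qed.
Local Notation mu := (@lebesgue_measure _).

Lemma muO (R : realType) (a b : R) : a <= b -> mu (`]a, b[ : set R) = (b - a)%:E.
Proof.
move=> ab; rewrite lebesgue_measure_itv /= lte_fin.
case: ltP => [//|ba]; have -> : a = b by apply/eqP; rewrite eq_le ab.
by rewrite subrr.
Qed.

Lemma muCO (R : realType) (a b : R) : a <= b -> mu (`[a, b[ : set R) = (b - a)%:E.
Proof.
move=> ab; rewrite lebesgue_measure_itv /= lte_fin.
case: ltP => [//|ba]; have -> : a = b by apply/eqP; rewrite eq_le ab.
by rewrite subrr.
Qed.

Lemma int_cst (R : realType) (A : set R) (k : R) : measurable A -> (mu A < +oo)%E ->
  mu.-integrable A (fun _ => k%:E).
Proof.
move=> mA Afin; apply/integrableP; split; first exact: measurable_cst.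
rewrite (eq_integral (cst (`|k|%:E))) // integral_cst //.
by rewrite lte_mul_pinfty.
Qed.

Lemma intO (R : realType) (x h : R -> R) (A : set R) (K : R) :
  measurable A -> A `<=` `]0, 1[ -> (mu A < +oo)%E -> inL2 x ->
  measurable_fun A h -> (forall t, A t -> `|h t| <= K * (1 + x t ^+ 2)) ->
  mu.-integrable A (EFin \o h).
Proof.
move=> mA A01 Afin [mx ix] mh hb.
have ix2 : mu.-integrable A (fun t => (x t ^+ 2)%:E).
  by apply: integrableS ix.
have i1 : mu.-integrable A (fun t => (1 + x t ^+ 2)%:E).
  have := integrableD _ (@int_cst R A 1 mA Afin) ix2.
  move=> /(_ mA).
  by apply: eq_integrable => // t _.
have iK : mu.-integrable A (fun t => (K * (1 + x t ^+ 2))%:E).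
  have := integrableZl _ K i1; move=> /(_ mA); apply: eq_integrable => // t _.

apply: (@le_integrable _ _ _ mu A _ _ (fun t => (K * (1 + x t ^+ 2))%:E)) => //.
- exact/measurable_realfun.measurable_EFinP.
- move=> t At /=; rewrite lee_fin.
  exact: le_trans (hb t At) (ler_norm _).
Qed.
Section H.
Variable R : realType.
Implicit Types (A : set R) (f g : R -> R).

Lemma iD A f g : measurable A -> mu.-integrable A (EFin \o f) -> mu.-integrable A (EFin \o g) ->
  mu.-integrable A (EFin \o (fun t => f t + g t)).
Proof.
move=> mA i1 i2; have := integrableD _ i1 i2; move=> /(_ mA).
by apply: eq_integrable => // t _.
Qed.

Lemma iB A f g : measurable A -> mu.-integrable A (EFin \o f) -> mu.-integrable A (EFin \o g) ->
  mu.-integrable A (EFin \o (fun t => f t - g t)).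
Proof.
move=> mA i1 i2; have := integrableB _ i1 i2; move=> /(_ mA).
by apply: eq_integrable => // t _.
Qed.

Lemma iZ A f k : measurable A -> mu.-integrable A (EFin \o f) ->
  mu.-integrable A (EFin \o (fun t => k * f t)).
Proof.
move=> mA i1; have := integrableZl _ k i1; move=> /(_ mA).
by apply: eq_integrable => // t _.
Qed.

Lemma iN A f : mu.-integrable A (EFin \o f) ->
  mu.-integrable A (EFin \o (fun t => `|f t|)).
Proof. exact: integrable_norm. Qed.
End H.

Lemma CS (R : realType) (A : set R) (f : R -> R) (L : R) :
  measurable A -> mu A = L%:E -> 0 < L ->
  mu.-integrable A (EFin \o f) -> mu.-integrable A (EFin \o (fun t => f t ^+ 2)) ->
  (Rintegral mu A (fun t => `|f t|)) ^+ 2 <= L * Rintegral mu A (fun t => f t ^+ 2).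
Proof.
move=> mA muA L0 i1 i2.
set I1 := Rintegral mu A (fun t => `|f t|).
set I2 := Rintegral mu A (fun t => f t ^+ 2).
set c := I1 / L.
have Afin : (mu A < +oo)%E by rewrite muA ltry.
have ia : mu.-integrable A (EFin \o (fun t => f t ^+ 2 - (2 * c) * `|f t|)).
  by apply: iB => //; apply: iZ => //; apply: iN.
have e : Rintegral mu A (fun t => (`|f t| - c) ^+ 2) = I2 - (2 * c) * I1 + c ^+ 2 * L.
  have -> : Rintegral mu A (fun t => (`|f t| - c) ^+ 2) =
      Rintegral mu A (fun t => (f t ^+ 2 - (2 * c) * `|f t|) + c ^+ 2).
    by apply: eq_Rintegral => t _; rewrite sqrrB real_normK ?num_real //; ring.
  rewrite RintegralD //; last exact: int_cst.
  rewrite RintegralB //; [|by apply: iZ => //; apply: iN].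
  rewrite RintegralZl //; last exact: iN.
  rewrite Rintegral_cst //; congr (_ + _ * _); exact: (congr1 fine muA).
have h0 : 0 <= Rintegral mu A (fun t => (`|f t| - c) ^+ 2).
  by apply: Rintegral_ge0 => t _; exact: sqr_ge0.
rewrite e /c in h0.
have : 0 <= L * (I2 - 2 * (I1 / L) * I1 + (I1 / L) ^+ 2 * L) by rewrite mulr_ge0 // ltW.
suff -> : L * (I2 - 2 * (I1 / L) * I1 + (I1 / L) ^+ 2 * L) = L * I2 - I1 ^+ 2 by rewrite subr_ge0.
by field; rewrite gt_eqF.
Qed.

Lemma cellP (R : realType) (m : nat) (s : R) : (0 < m)%N -> 0 <= s -> s < 1 ->
  exists i : nat, [/\ (i < m)%N, cell_left m s = i%:R / m%:R &
    i%:R / m%:R <= s < i%:R / m%:R + m%:R^-1].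
Proof.
move=> m0 s0 s1.
have mR : (0 : R) < m%:R by rewrite ltr0n.
set k := Num.floor (m%:R * s).
have k0 : 0 <= k by rewrite /k floor_ge0 mulr_ge0 // ltW.
have km : k < m%:Z.
  rewrite /k floor_lt_int /=. 
  by rewrite -[X in _ < X]mulr1 ltr_pM2l.
exists `|k|%N.
have kE : (`|k|%N%:R : R) = k%:~R by rewrite natr_absz ger0_norm.
have := floor_itv (m%:R * s); rewrite -/k => /andP[h1 h2].
split.
- by rewrite -ltz_nat gez0_abs.
- by rewrite /cell_left kE.
- rewrite kE; apply/andP; split.
    by rewrite ler_pdivrMr // mulrC.
  have -> : (k%:~R / m%:R + m%:R^-1 : R) = (k%:~R + 1) / m%:R by rewrite mulrDl mul1r.
  rewrite ltr_pdivlMr // mulrC.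
  by move: h2; rewrite intrD.
Qed.

Lemma cell_open (R : realType) (a b : R) (f : R -> R) :
  measurable_fun (`]a, b[ : set R) f ->
  Rintegral mu (`[a, b[ : set R) f = Rintegral mu (`]a, b[ : set R) f.
Proof.
move=> mf; rewrite /Rintegral; congr fine.
by rewrite -integral_itv_obnd_cbnd //; exact/measurable_realfun.measurable_EFinP.
Qed.

Lemma kern (R : realType) (u c : R) : `|u| <= c -> c <= 1 ->
  `|expR u - 1| <= 2 * c /\ expR u <= 1 + 2 * c.
Proof.
move=> uc c1; have c0 : 0 <= c by apply: le_trans uc.
have g := expR_ge1Dx u.
have [u0|u0] := leP 0 u.
- have := @expR_le_12 R u u0 (le_trans (real_ler_norm (num_real u)) (le_trans uc c1)).
  move: uc; rewrite ger0_norm // => uc h.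
  rewrite ger0_norm; last by rewrite subr_ge0 -expR0 ler_expR.
  split; lra.
- move: uc; rewrite ltr0_norm // => uc.
  have e1 : expR u <= 1 by rewrite expR_le1 ltW.
  rewrite ler0_norm; last by rewrite subr_le0.
  split; lra.
Qed.

Lemma mexpN (R : realType) (sigma : R) (A : set R) :
  measurable_fun A (fun t => expR (- (sigma * t))).
Proof.
apply: (@measurableT_comp _ _ _ _ _ _ expR _ (fun t => - (sigma * t))).
  exact: measurable_expR.
apply: (@measurableT_comp _ _ _ _ _ _ (fun u : R => - u) _ (fun t => sigma * t)).
  exact: measurable_funN.
exact: measurable_funM.
Qed.

Definition cO (R : realType) (m i : nat) : set R :=
  `](i%:R / m%:R), (i%:R / m%:R + m%:R^-1)[.
Definition cH (R : realType) (m i : nat) : set R :=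
  `[(i%:R / m%:R), (i%:R / m%:R + m%:R^-1)[.

Lemma cO_sub (R : realType) (m i : nat) : (0 < m)%N -> (i < m)%N -> cO R m i `<=` `]0, 1[.
Proof.
move=> m0 im t; rewrite /cO /= !in_itv /= => /andP[h1 h2].
have mR : (0 : R) < m%:R by rewrite ltr0n.
apply/andP; split.
  by apply: (le_lt_trans _ h1); rewrite divr_ge0.
apply: (lt_le_trans h2).
have -> : (i%:R / m%:R + m%:R^-1 : R) = (i.+1)%:R / m%:R by rewrite -addn1 natrD mulrDl mul1r.
by rewrite ler_pdivrMr // mul1r ler_nat.
Qed.

Lemma cO_triv (R : realType) (m : nat) : (0 < m)%N -> trivIset setT (cO R m).
Proof.
move=> m0 i j _ _ [t [/=]]; rewrite /cO /= !in_itv /= => /andP[a1 a2] /andP[b1 b2].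
have mR : (0 : R) < m%:R by rewrite ltr0n.
have E k : (k%:R / m%:R + m%:R^-1 : R) = (k.+1)%:R / m%:R by rewrite -addn1 natrD mulrDl mul1r.
rewrite E in a2; rewrite E in b2.
have mi : (0 : R) < m%:R^-1 by rewrite invr_gt0.
have ij : (i%:R : R) < j.+1%:R by rewrite -(ltr_pM2r mi); exact: (lt_trans a1 b2).
have ji : (j%:R : R) < i.+1%:R by rewrite -(ltr_pM2r mi); exact: (lt_trans b1 a2).
rewrite ltr_nat in ij; rewrite ltr_nat in ji.
by apply/eqP; rewrite eqn_leq -ltnS ij -ltnS ji.
Qed.

Lemma ge0_le_integral_nm d (T : measurableType d) (R : realType)
  (mu : {measure set T -> \bar R}) (D : set T) (f g : T -> \bar R) :
  (forall x, D x -> (0 <= f x)%E) -> (forall x, D x -> (f x <= g x)%E) ->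
  (\int[mu]_(x in D) f x <= \int[mu]_(x in D) g x)%E.
Proof.
move=> f0 fg.
have g0 : forall x, D x -> (0 <= g x)%E by move=> x Dx; exact: le_trans (f0 x Dx) (fg x Dx).
rewrite (ge0_integralE _ f0) (ge0_integralE _ g0).
apply: ereal_sup_le => _ [h hf <-]; exists h => //= x.
apply: le_trans (hf x) _; rewrite /patch; case: ifP => // /set_mem; exact: fg.
Qed.

Lemma bigU_sub (R : realType) (m : nat) (s : seq nat) : (0 < m)%N ->
  all (fun i => i < m)%N s -> \big[setU/set0]_(i <- s) cO R m i `<=` `]0, 1[.
Proof.
move=> m0; elim: s => [|h s ih] /=; first by move=> _; rewrite big_nil.
move=> /andP[hm hs]; rewrite big_cons => t [Ht|Ht].
  exact: (@cO_sub R m h m0 hm t Ht).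
exact: ih hs t Ht.
Qed.

Lemma glob (R : realType) (sigma : R) (m : nat) (x G : R -> R) (C : R) :
  0 < sigma -> (0 < m)%N -> 0 <= C -> inL2 x ->
  (forall s, (`]0, 1[%classic : set R) s -> exists i, [/\ (i < m)%N, cH R m i s &
     expR (- (2 * sigma * s)) * G s ^+ 2 <=
       C ^+ 2 * m%:R * Rintegral mu (cO R m i) (fun t => (expR (- (sigma * t)) * x t) ^+ 2)]) ->
  wnorm sigma G <= C * wnorm sigma x.
Proof.
move=> s0 m0 C0 [mx ix] hG.
have mR : (0 : R) < m%:R by rewrite ltr0n.
set y2 := fun t => (expR (- (sigma * t)) * x t) ^+ 2.
have my2 : measurable_fun (`]0, 1[%classic : set R) y2.
  by apply: measurable_funX; apply: measurable_funM => //; exact: mexpN.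
have iy2 : mu.-integrable (`]0, 1[%classic : set R) (EFin \o y2).
  apply: (le_integrable _ _ _ ix) => //.
  - exact/measurable_EFinP.
  - move=> t; rewrite /= in_itv /= => /andP[t0 t1].
    rewrite lee_fin ger0_norm ?sqr_ge0 // ger0_norm ?sqr_ge0 //.
    rewrite /y2 exprMn -[leRHS]mul1r ler_wpM2r ?sqr_ge0 //.
    rewrite expr_le1 ?expR_ge0 // expR_le1 oppr_le0 mulr_ge0 // ltW //.
have wx : Rintegral mu (`]0, 1[%classic : set R) (fun t => expR (- (2 * sigma * t)) * x t ^+ 2) =
    Rintegral mu (`]0, 1[%classic : set R) y2.
  apply: eq_Rintegral => t _; rewrite /y2 exprMn -expRM_natl.
  by congr (expR _ * _); rewrite mulrN mulrA.
set E := (\int[mu]_(t in (`]0%R, 1%R[%classic : set R)) (y2 t)%:E)%E.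
have Efin : E \is a fin_num by apply: integrable_fin_num.
have iyO i : (i < m)%N -> mu.-integrable (cO R m i) (EFin \o y2).
  by move=> im; apply: (integrableS _ _ _ iy2) => //; [exact: measurable_itv | exact: (@cO_sub R m i m0 im)].
set Y := fun i => Rintegral mu (cO R m i) y2.
have Y0 i : 0 <= Y i by apply: Rintegral_ge0 => t _; exact: sqr_ge0.
have sumY : \sum_(i < m) Y i <= fine E.
  rewrite -lee_fin -sumEFin (fineK Efin).
  have -> : \sum_(i < m) (Y i)%:E = \sum_(i < m) (\int[mu]_(t in cO R m i) (y2 t)%:E)%E.
    apply: eq_bigr => i _; rewrite /Y /Rintegral fineK //.
    by apply: integrable_fin_num; [exact: measurable_itv | exact: (iyO i (ltn_ord i))].
  rewrite -(big_mkord xpredT (fun i => (\int[mu]_(t in cO R m i) (y2 t)%:E)%E)).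
  have allm : all (fun i => i < m)%N (index_iota 0 m).
    by apply/allP => i; rewrite mem_index_iota.
  rewrite -integral_bigsetU_EFin //.
  - rewrite /E; apply: (@ge0_subset_integral _ _ _ mu) => //.
    + by apply: bigsetU_measurable => i _; exact: measurable_itv.
    + exact/measurable_EFinP.
    + by move=> t _; rewrite lee_fin sqr_ge0.
    + exact: bigU_sub.
  - by move=> i; exact: measurable_itv.
  - by rewrite /index_iota iota_uniq.
  - by apply: (@sub_trivIset _ _ _ setT) => //; exact: cO_triv.
  - apply: (measurable_funS _ (@bigU_sub R m _ m0 allm)) => //.
    exact/measurable_EFinP.
have main : (\int[mu]_(s in (`]0%R, 1%R[%classic : set R)) (expR (- (2 * sigma * s)) * G s ^+ 2)%:E
    <= (C ^+ 2 * fine E)%:E)%E.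
  pose S := fun s => \sum_(i < m) (C ^+ 2 * m%:R * Y i) * \1_(cH R m i) s.
  apply: (@le_trans _ _ (\int[mu]_(s in (`]0%R, 1%R[%classic : set R)) (S s)%:E)%E).
    apply: ge0_le_integral_nm => s Ds.
      by rewrite lee_fin mulr_ge0 ?expR_ge0 ?sqr_ge0.
    have [i [im Hi hb]] := hG s Ds.
    rewrite lee_fin /S (bigD1 (Ordinal im)) //= indicE mem_set // mulr1.
    apply: (le_trans hb); rewrite lerDl; apply: sumr_ge0 => j _.
    by rewrite mulr_ge0 // ?mulr_ge0 ?sqr_ge0 ?Y0 // indicE; case: (_ \in _).
  rewrite /S; under eq_integral do rewrite -sumEFin.
  rewrite ge0_integral_sum //; last 2 first.
  - move=> i; apply/measurable_EFinP; apply: measurable_funM => //.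
    by apply: measurable_indic; exact: measurable_itv.
  - move=> i s _; rewrite lee_fin mulr_ge0 // ?mulr_ge0 ?sqr_ge0 ?Y0 //.
  apply: (@le_trans _ _ (\sum_(i < m) (C ^+ 2 * Y i)%:E)%E).
    apply: lee_sum => i _.
    under eq_integral do rewrite EFinM.
    rewrite ge0_integralZl //; [|by apply: measurableT_comp => //; apply: measurable_indic; exact: measurable_itv
      | by rewrite lee_fin mulr_ge0 // ?mulr_ge0 ?sqr_ge0 ?Y0].
    rewrite integral_indic //; last exact: measurable_itv.
    have mpos : (0 : R) < m%:R^-1 by rewrite invr_gt0.
    apply: (@le_trans _ _ ((C ^+ 2 * m%:R * Y i)%:E * (m%:R^-1)%:E)%E).
      apply: lee_pmul => //.
      - by rewrite lee_fin mulr_ge0 // ?mulr_ge0 ?sqr_ge0 ?Y0.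
      - apply: (@le_trans _ _ (mu (cH R m i))).
          by apply: measureIl; exact: measurable_itv.
        rewrite muCO; last by rewrite lerDl ltW.
        by rewrite addrAC subrr add0r.
    rewrite -EFinM lee_fin mulrAC -(mulrA (C ^+ 2)) mulfV ?gt_eqF // mulr1.
    done.
  by rewrite sumEFin lee_fin -mulr_sumr ler_wpM2l // sqr_ge0.
set L := (\int[mu]_(s in (`]0%R, 1%R[%classic : set R)) (expR (- (2 * sigma * s)) * G s ^+ 2)%:E)%E.
have L0 : (0 <= L)%E by apply: integral_ge0 => s _; rewrite lee_fin mulr_ge0 ?expR_ge0 ?sqr_ge0.
have Lfin : L \is a fin_num by rewrite ge0_fin_numE // (le_lt_trans main) ?ltry.
have hL : fine L <= C ^+ 2 * fine E by rewrite -lee_fin fineK.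
rewrite /wnorm wx.
have -> : Rintegral mu (`]0%R, 1%R[%classic : set R) y2 = fine E by [].
have -> : C * Num.sqrt (fine E) = Num.sqrt (C ^+ 2 * fine E).
  by rewrite sqrtrM ?sqr_ge0 // sqrtr_sqr ger0_norm.
rewrite ler_sqrt; first exact: hL.
by rewrite mulr_ge0 ?sqr_ge0 // fine_ge0 // integral_ge0 // => t _; rewrite lee_fin sqr_ge0.
Qed.

Lemma absle (R : realType) (r : R) : `|r| <= 1 + r ^+ 2.
Proof.
have h : r ^+ 2 = `|r| ^+ 2 by rewrite real_normK ?num_real.
have n0 := normr_ge0 r.
rewrite h; nra.
Qed.

Lemma cO_prop (R : realType) (m i : nat) : (0 < m)%N -> (i < m)%N ->
  [/\ measurable (cO R m i), cO R m i `<=` `]0, 1[ , mu (cO R m i) = (m%:R^-1)%:E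
    & (mu (cO R m i) < +oo)%E].
Proof.
move=> m0 im.
have mR : (0 : R) < m%:R by rewrite ltr0n.
have e : mu (cO R m i) = (m%:R^-1)%:E.
  rewrite /cO muO; first by rewrite addrAC subrr add0r.
  by rewrite lerDl ltW // invr_gt0.
split => //; [exact: measurable_itv | exact: cO_sub | by rewrite e ltry].
Qed.

Lemma core (R : realType) (sigma : R) (m i : nat) (x : R -> R) (V K : R) :
  0 < sigma -> (0 < m)%N -> (i < m)%N -> inL2 x -> 0 <= K ->
  `|V| <= m%:R * (K * Rintegral mu (cO R m i) (fun t => `|expR (- (sigma * t)) * x t|)) ->
  V ^+ 2 <= K ^+ 2 * m%:R * Rintegral mu (cO R m i) (fun t => (expR (- (sigma * t)) * x t) ^+ 2).
Proof.
move=> s0 m0 im hx K0 hV.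
have [mx ix] := hx.
have mR : (0 : R) < m%:R by rewrite ltr0n.
have [mO sO muO' fO] := @cO_prop R m i m0 im.
set y := fun t => expR (- (sigma * t)) * x t.
have my : measurable_fun (cO R m i) y.
  by apply: measurable_funM; [exact: mexpN | exact: (measurable_funS _ sO mx)].
have ey t : cO R m i t -> expR (- (sigma * t)) <= 1.
  move=> /sO; rewrite /= in_itv /= => /andP[t0 _].
  by rewrite expR_le1 oppr_le0 mulr_ge0 // ltW.
have iy : mu.-integrable (cO R m i) (EFin \o y).
  apply: (@intO R x y _ 1) => // t Ot; rewrite mul1r.
  apply: (le_trans _ (absle _ (x t))); rewrite /y normrM ger0_norm ?expR_ge0 //.
  by rewrite -[leRHS]mul1r ler_wpM2r // ey.
have iy2 : mu.-integrable (cO R m i) (EFin \o (fun t => y t ^+ 2)).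
  apply: (@intO R x _ _ 1) => //; first exact: measurable_funX.
  move=> t Ot; rewrite mul1r ger0_norm ?sqr_ge0 // /y exprMn.
  apply: (@le_trans _ _ (x t ^+ 2)); last by rewrite lerDr.
  rewrite -[leRHS]mul1r ler_wpM2r ?sqr_ge0 //.
  by rewrite expr_le1 ?expR_ge0 // ey.
have mi : (0 : R) < m%:R^-1 by rewrite invr_gt0.
have cs := CS _ _ _ _ mO muO' mi iy iy2.
set I1 := Rintegral mu (cO R m i) (fun t => `|y t|) in cs hV.
set Y := Rintegral mu (cO R m i) (fun t => y t ^+ 2) in cs *.
have I0 : 0 <= I1 by apply: Rintegral_ge0 => t _.
rewrite -(real_normK (num_real V)).
have h1 : `|V| ^+ 2 <= (m%:R * (K * I1)) ^+ 2.
  by rewrite lerXn2r // nnegrE // mulr_ge0 // ?mulr_ge0 // ltW.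
apply: (le_trans h1).
have h2 : (m%:R * K) ^+ 2 * I1 ^+ 2 <= (m%:R * K) ^+ 2 * (m%:R^-1 * Y).
  by rewrite ler_wpM2l // sqr_ge0.
have -> : (m%:R * (K * I1)) ^+ 2 = (m%:R * K) ^+ 2 * I1 ^+ 2 by ring.
apply: (le_trans h2); rewrite le_eqVlt; apply/orP; left; apply/eqP.
by field; rewrite gt_eqF.
Qed.

Lemma intxy (R : realType) (sigma : R) (m i : nat) (x : R -> R) :
  0 < sigma -> (0 < m)%N -> (i < m)%N -> inL2 x ->
  mu.-integrable (cO R m i) (EFin \o x) /\
  mu.-integrable (cO R m i) (EFin \o (fun t => expR (- (sigma * t)) * x t)).
Proof.
move=> s0 m0 im hx; have [mx ix] := hx.
have [mO sO muO' fO] := @cO_prop R m i m0 im.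
have ey t : cO R m i t -> expR (- (sigma * t)) <= 1.
  move=> /sO; rewrite /= in_itv /= => /andP[t0 _].
  by rewrite expR_le1 oppr_le0 mulr_ge0 // ltW.
split.
  apply: (@intO R x x _ 1) => //; first exact: (measurable_funS _ sO mx).
  by move=> t _; rewrite mul1r absle.
apply: (@intO R x _ _ 1) => //.
  by apply: measurable_funM; [exact: mexpN | exact: (measurable_funS _ sO mx)].
move=> t Ot; rewrite mul1r.
apply: (le_trans _ (absle _ (x t))); rewrite normrM ger0_norm ?expR_ge0 //.
by rewrite -[leRHS]mul1r ler_wpM2r // ey.
Qed.

Lemma Qcell (R : realType) (sigma : R) (m i : nat) (x : R -> R) (s : R) :
  (0 < m)%N -> (i < m)%N -> inL2 x -> 0 <= s -> s < 1 -> cell_left m s = i%:R / m%:R ->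
  Qm m x s = m%:R * Rintegral mu (cO R m i) x /\
  Qms sigma m x s = expR (sigma * s) *
     (m%:R * Rintegral mu (cO R m i) (fun t => expR (- (sigma * t)) * x t)).
Proof.
move=> m0 im hx s0 s1 hc; have [mx ix] := hx.
have [mO sO muO' fO] := @cO_prop R m i m0 im.
have hs : (0 <= s) && (s < 1) by rewrite s0 s1.
rewrite /Qm /Qms hs /cell hc !cell_open //.
  by apply: measurable_funM; [exact: mexpN | exact: (measurable_funS _ sO mx)].
exact: (measurable_funS _ sO mx).
Qed.

Lemma kbound (R : realType) (sigma : R) (m i : nat) (s t : R) :
  0 < sigma -> sigma <= m%:R -> (0 < m)%N -> cO R m i t ->
  i%:R / m%:R <= s < i%:R / m%:R + m%:R^-1 ->
  `|expR (sigma * (t - s)) - 1| <= 2 * sigma / m%:R /\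
  expR (sigma * (t - s)) <= 1 + 2 * sigma / m%:R.
Proof.
move=> s0 hm m0; rewrite /cO /= in_itv /= => /andP[t1 t2] /andP[h1 h2].
have mR : (0 : R) < m%:R by rewrite ltr0n.
have mi : (0 : R) < m%:R^-1 by rewrite invr_gt0.
have hu : `|sigma * (t - s)| <= sigma / m%:R.
  rewrite normrM gtr0_norm // ler_wpM2l // ?ltW //.
  rewrite ltr_norml; apply/andP; split; lra.
have c1 : sigma / m%:R <= 1 by rewrite ler_pdivrMr // mul1r.
have := kern _ _ _ hu c1; by rewrite mulrA.
Qed.

Theorem lemma3p1 (R : realType) (sigma : R) (m : nat)
  (hsigma : 0 < sigma) (hm : sigma <= m%:R) :
  (forall x : R -> R, inL2 x ->
     wnorm sigma (fun s => Qm m x s - Qms sigma m x s)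
       <= (2 * sigma / m%:R) * wnorm sigma x) /\
  (forall x : R -> R, inL2 x ->
     wnorm sigma (Qm m x) <= (1 + 2 * sigma / m%:R) * wnorm sigma x).
Proof.
have mR : (0 : R) < m%:R by apply: lt_le_trans hm.
have m0 : (0 < m)%N by rewrite -(ltr0n R).
have K0 : (0 : R) <= 2 * sigma / m%:R by rewrite divr_ge0 // mulr_ge0 // ltW.
have K1 : (0 : R) <= 1 + 2 * sigma / m%:R by rewrite addr_ge0.
split => x hx.
- apply: (@glob R sigma m x _ (2 * sigma / m%:R)) => // s Ds.
  have /andP[s0 s1] : (0 < s < 1) by move: Ds; rewrite /= in_itv.
  have [i [im hc hb]] := @cellP R m s m0 (ltW s0) s1.
  exists i; split => //.
  have [hQ hQs] := @Qcell R sigma m i x s m0 im hx (ltW s0) s1 hc.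
  have [ix iy] := @intxy R sigma m i x hsigma m0 im hx.
  have [mO sO muO' fO] := @cO_prop R m i m0 im.
  set y := fun t => expR (- (sigma * t)) * x t.
  set A := Rintegral mu (cO R m i) x.
  set B := Rintegral mu (cO R m i) y.
  have eE : expR (- (sigma * s)) * expR (sigma * s) = 1 by rewrite mulrC expRxMexpNx_1.
  have e2 : forall V, expR (- (2 * sigma * s)) * V ^+ 2 = (expR (- (sigma * s)) * V) ^+ 2.
    by move=> V; rewrite exprMn -expRM_natl; congr (expR _ * _); rewrite mulrN mulrA.
  rewrite e2; apply: core => //.
  rewrite hQ hQs -/y -/A -/B.
  have ixs : mu.-integrable (cO R m i) (EFin \o (fun t => expR (- (sigma * s)) * x t)).
    exact: iZ.
  have ih : mu.-integrable (cO R m i) (EFin \o (fun t => expR (- (sigma * s)) * x t - y t)).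
    exact: iB.
  have -> : expR (- (sigma * s)) * (m%:R * A - expR (sigma * s) * (m%:R * B)) =
      m%:R * Rintegral mu (cO R m i) (fun t => expR (- (sigma * s)) * x t - y t).
    rewrite RintegralB // RintegralZl //.
    have -> : expR (- (sigma * s)) * (m%:R * A - expR (sigma * s) * (m%:R * B)) =
      m%:R * (expR (- (sigma * s)) * A) - (expR (- (sigma * s)) * expR (sigma * s)) * (m%:R * B) by ring.
    by rewrite eE mul1r mulrBr.
  rewrite normrM ger0_norm ?ler0n // ler_wpM2l ?ler0n //.
  apply: (le_trans (@le_normr_Rintegral _ _ _ mu _ _ mO ih)).
  rewrite -RintegralZl //; last exact: iN.
  apply: le_Rintegral => //; [exact: iN | by apply: iZ => //; exact: iN |].
  move=> t Ot.
  have ex : expR (- (sigma * s)) = expR (sigma * (t - s)) * expR (- (sigma * t)).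
    by rewrite -expRD; congr expR; ring.
  have [k1 _] := @kbound R sigma m i s t hsigma hm m0 Ot hb.
  rewrite /y ex -mulrA -[X in _ - X]mul1r -mulrBl normrM.
  by rewrite ler_wpM2r.
- apply: (@glob R sigma m x _ (1 + 2 * sigma / m%:R)) => // s Ds.
  have /andP[s0 s1] : (0 < s < 1) by move: Ds; rewrite /= in_itv.
  have [i [im hc hb]] := @cellP R m s m0 (ltW s0) s1.
  exists i; split => //.
  have [hQ hQs] := @Qcell R sigma m i x s m0 im hx (ltW s0) s1 hc.
  have [ix iy] := @intxy R sigma m i x hsigma m0 im hx.
  have [mO sO muO' fO] := @cO_prop R m i m0 im.
  set y := fun t => expR (- (sigma * t)) * x t.
  have e2 : forall V, expR (- (2 * sigma * s)) * V ^+ 2 = (expR (- (sigma * s)) * V) ^+ 2.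
    by move=> V; rewrite exprMn -expRM_natl; congr (expR _ * _); rewrite mulrN mulrA.
  rewrite e2; apply: core => //.
  rewrite hQ.
  have ixs : mu.-integrable (cO R m i) (EFin \o (fun t => expR (- (sigma * s)) * x t)).
    exact: iZ.
  rewrite mulrCA normrM ger0_norm ?ler0n // ler_wpM2l ?ler0n //.
  have -> : expR (- (sigma * s)) * Rintegral mu (cO R m i) x =
      Rintegral mu (cO R m i) (fun t => expR (- (sigma * s)) * x t) by rewrite RintegralZl.
  apply: (le_trans (@le_normr_Rintegral _ _ _ mu _ _ mO ixs)).
  rewrite -RintegralZl //; last exact: iN.
  apply: le_Rintegral => //; [exact: iN | by apply: iZ => //; exact: iN |].
  move=> t Ot.
  have ex : expR (- (sigma * s)) = expR (sigma * (t - s)) * expR (- (sigma * t)).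
    by rewrite -expRD; congr expR; ring.
  have [_ k2] := @kbound R sigma m i s t hsigma hm m0 Ot hb.
  rewrite ex -mulrA normrM ger0_norm ?expR_ge0 //.
  by rewrite ler_wpM2r.
Qed.
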